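(* Assume $\theta_i<1$ for all $i$ and $\theta_j>0$ for some $j$. Suppose $\mathcal G(C)$ is a star topology with center node $l$ and $\theta_l=0$. Then for every $x(0)\in\Delta_n$ the trajectory of system (A) converges exponentially to the unique equilibrium $x^*$, given by $x^*_i=1/n$ for $i\in\mathcal V_f\setminus\{l\}$, $x^*_i=\dfrac{n-\sqrt{n^2-4n\theta_i(1-\theta_i)}}{2n\theta_i}$ for $i\in\mathcal V_p$, and $x^*_l=\dfrac1n+\dfrac1n\sum_{j\in\mathcal V_p}\dfrac{\theta_j(1-x^*_j)}{1-\theta_jx^*_j}$.
   Context: Let $n\ge 2$, $\mathbf 1_n$ the all-ones vector, $I_n$ the identity matrix, $\Delta_n=\{x\in\mathbb R^n: x\ge 0,\ \mathbf 1_n^Tx=1\}$. Let $C\in\mathbb R^{n\times n}$ be a nonnegative row-stochastic matrix with zero diagonal, and $\mathcal G(C)$ the digraph on $\{1,\dots,n\}$ with an edge $(i,j)$ iff $C_{ij}>0$. $\mathcal G(C)$ is a star topology with center node $l$ if every edge of $\mathcal G(C)$ is either from $l$ or to $l$ (i.e. $C_{ij}>0$ implies $i=l$ or $j=l$). Let $\theta=(\theta_1,\dots,\theta_n)\in[0,1]^n$, $\Theta=\mathrm{diag}(\theta)$, $W(x)=\mathrm{diag}(x)+(I_n-\mathrm{diag}(x))C$. Let $\mathcal V_f=\{i:\theta_i=0\}$ and $\mathcal V_p=\{i:\theta_i>0\}$. System (A): $x(s+1)=F(x(s))$, $s=0,1,2,\dots$, $x(0)\in\Delta_n$, where $F(x)=(I_n-\Theta)(I_n-W(x)^T\Theta)^{-1}\mathbf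 1_n/n$. *)

(* Defs.v *)
(* the reals are an arbitrary real closed field R : rcfType
   (contains the reals as a special case; only algebra, order and sqrt used). *)
From HB Require Import structures.
From mathcomp Require Import all_boot all_order all_algebra.
Set Implicit Arguments. Unset Strict Implicit. Unset Printing Implicit Defensive.
Import Order.TTheory GRing.Theory Num.Theory.
Local Open Scope ring_scope.

Section Defs.
Variable R : rcfType.
Variable n : nat.

Definition in_simplex (x : 'cV[R]_n) : Prop :=
  (forall i, 0 <= x i 0) /\ \sum_i x i 0 = 1.

Definition row_stochastic_zero_diag (C : 'M[R]_n) : Prop :=
  (forall i j, 0 <= C i j) /\ (forall i, \sum_j C i j = 1) /\ (forall i, C i i = 0).

Definition star_topology (C : 'M[R]_n) (l : 'I_n) : Prop :=
  forall i j, 0 < C i j -> i = l \/ j = l.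

Definition diagv (x : 'cV[R]_n) : 'M[R]_n := diag_mx x^T.

Definition Wmat (C : 'M[R]_n) (x : 'cV[R]_n) : 'M[R]_n :=
  diagv x + (1%:M - diagv x) *m C.

Definition ones : 'cV[R]_n := const_mx 1.

Definition Fmap (C : 'M[R]_n) (theta : 'cV[R]_n) (x : 'cV[R]_n) : 'cV[R]_n :=
  (1%:M - diagv theta) *m invmx (1%:M - (Wmat C x)^T *m diagv theta)
    *m ((n%:R)^-1 *: ones).

Definition traj (C : 'M[R]_n) (theta x0 : 'cV[R]_n) (s : nat) : 'cV[R]_n :=
  iter s (Fmap C theta) x0.

Definition xstar_p (t : R) : R :=
  (n%:R - Num.sqrt (n%:R ^+ 2 - 4%:R * n%:R * t * (1 - t))) / (2%:R * n%:R * t).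

Definition xstar (theta : 'cV[R]_n) (l : 'I_n) : 'cV[R]_n :=
  \col_i (if i == l then
            n%:R^-1 + n%:R^-1 *
              \sum_(j | 0 < theta j 0)
                 (theta j 0 * (1 - xstar_p (theta j 0)) /
                  (1 - theta j 0 * xstar_p (theta j 0)))
          else if 0 < theta i 0 then xstar_p (theta i 0)
          else n%:R^-1).

End Defs.

(* Main.v *)
Require Import Defs.
From HB Require Import structures.
From mathcomp Require Import all_boot all_order all_algebra.
From mathcomp Require Import ring lra.
Import Order.TTheory GRing.Theory Num.Theory.
Local Open Scope ring_scope.
Lemma xp_props (R : rcfType) (n : nat) (t : R) : (2 <= n)%N -> 0 < t -> t < 1 ->
  0 <= xstar_p n t /\ xstar_p n t <= n%:R^-1 /\
  xstar_p n t = (1 - t) * (n%:R^-1 / (1 - t * xstar_p n t)).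
Proof.
move=> hn t0 t1.
have N2 : 2 <= n%:R :> R by rewrite (ler_nat R 2 n).
set N : R := n%:R in N2 *.
set D := N ^+ 2 - 4%:R * N * t * (1 - t).
have D0 : 0 <= D.
  rewrite /D; have : 4%:R * t * (1 - t) <= 1.
    have := sqr_ge0 (2%:R * t - 1); rewrite expr2; nra.
  move=> h; nra.
set s := Num.sqrt D.
have s0 : 0 <= s by apply: sqrtr_ge0.
have s2 : s ^+ 2 = D by rewrite sqr_sqrtr.
have sN : s <= N.
  rewrite -(@ler_pXn2r _ 2%N) ?nnegrE //; try lra.
  rewrite s2 /D.
  have h : 0 <= N * t * (1 - t) by rewrite !mulr_ge0 //; lra.
  nra.
have -> : xstar_p n t = (N - s) / (2%:R * N * t) by [].
set z := (N - s) / (2%:R * N * t).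
have den0 : 0 < 2%:R * N * t by apply: mulr_gt0 => //; apply: mulr_gt0; lra.
have hz : z * (2%:R * N * t) = N - s by rewrite /z mulfVK ?gt_eqF.
have z0 : 0 <= z by rewrite /z divr_ge0 //; lra.
have quad : N * t * z ^+ 2 - N * z + (1 - t) = 0.
  have h4 : 4%:R * N * t != 0 by rewrite gt_eqF // !mulr_gt0 //; lra.
  apply/eqP; rewrite -(mulIr_eq0 _ (mulIf h4)) //.
  have -> : (N * t * z ^+ 2 - N * z + (1 - t)) * (4%:R * N * t)
     = (z * (2%:R * N * t)) ^+ 2 - 2%:R * N * (z * (2%:R * N * t)) + 4%:R * N * t * (1 - t) by ring.
  rewrite hz; apply/eqP.
  have -> : (N - s) ^+ 2 - 2%:R * N * (N - s) + 4%:R * N * t * (1 - t) = s ^+ 2 - D by rewrite /D; ring.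
  by rewrite s2 subrr.
have z1 : z <= 1.
  have : z * (2%:R * N * t) <= N by rewrite hz; lra.
  nra.
have tz : 0 < 1 - t * z by nra.
have key : N * z * (1 - t * z) = 1 - t.
  by rewrite -[RHS]subr0 -quad; ring.
have hfix : z = (1 - t) * (N^-1 / (1 - t * z)).
  rewrite -key; field; rewrite ?gt_eqF //; lra.
split=> //; split=> //.
have Nz : N * z <= 1.
  have h1 : 1 - t <= 1 - t * z by nra.
  have h2 : N * z * (1 - t) <= 1 - t.
    by rewrite -{2}key; apply: ler_wpM2l => //; rewrite mulr_ge0 //; lra.
  nra.
have N0 : 0 < N by lra.
by rewrite -(ler_pM2l N0) mulfV ?gt_eqF.
Qed.
Lemma K_bound (R : rcfType) (n : nat) (t a b : R) : (2 <= n)%N -> 0 <= t -> t < 1 ->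
  0 <= a <= 1 -> 0 <= b <= 2%:R^-1 ->
  0 <= (1 - t) / (n%:R * (1 - t * a) * (1 - t * b)) <= 1.
Proof.
move=> hn t0 t1 /andP[a0 a1] /andP[b0 b1].
have N2 : 2 <= n%:R :> R by rewrite (ler_nat R 2 n).
set N : R := n%:R in N2 *.
have h2 : 2%:R^-1 * 2%:R = 1 :> R by rewrite mulVf // pnatr_eq0.
have da : 1 - t <= 1 - t * a by nra.
have db : 2%:R^-1 <= 1 - t * b by nra.
have pos : 0 < N * (1 - t * a) * (1 - t * b).
  by rewrite !mulr_gt0 //; lra.
apply/andP; split; first by rewrite divr_ge0 //; lra.
rewrite ler_pdivrMr // mul1r.
have : (1 - t) * 1 <= (1 - t * a) * (2%:R * (1 - t * b)).
  apply: ler_pM => //; lra.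
nra.
Qed.

Lemma g_contr (R : rcfType) (n : nat) (t a b : R) : (2 <= n)%N -> 0 <= t -> t < 1 ->
  0 <= a <= 1 -> 0 <= b <= 2%:R^-1 ->
  `|(1 - t) * (n%:R^-1 / (1 - t * a)) - (1 - t) * (n%:R^-1 / (1 - t * b))| <= t * `|a - b|.
Proof.
move=> hn t0 t1 ha hb.
have /andP[K0 K1] := @K_bound R n t a b hn t0 t1 ha hb.
have N0 : n%:R != 0 :> R by rewrite pnatr_eq0; apply/eqP => n0; rewrite n0 in hn.
move: ha hb => /andP[a0 a1] /andP[b0 b1].
have da : 1 - t * a != 0 by apply/lt0r_neq0; nra.
have db : 1 - t * b != 0.
  have h2 : 2%:R^-1 < 1 :> R by rewrite invf_lt1 ?ltr1n // ltr0n.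
  by apply/lt0r_neq0; nra.
have -> : (1 - t) * (n%:R^-1 / (1 - t * a)) - (1 - t) * (n%:R^-1 / (1 - t * b))
   = t * (a - b) * ((1 - t) / (n%:R * (1 - t * a) * (1 - t * b))).
  move: N0 da db; set N := n%:R; move=> N0 da db. by field; rewrite N0 da db.
rewrite normrM [`|_ * _|]normrM (ger0_norm t0) (ger0_norm K0).
rewrite -[X in _ <= X]mulr1; apply: ler_wpM2l => //.
by rewrite mulr_ge0.
Qed.

Lemma T_contr (R : rcfType) (n : nat) (t a b : R) : (2 <= n)%N -> 0 <= t -> t < 1 ->
  0 <= a <= 1 -> 0 <= b <= 2%:R^-1 ->
  `|(1 - a) * t * (n%:R^-1 / (1 - t * a)) - (1 - b) * t * (n%:R^-1 / (1 - t * b))| <= `|a - b|.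
Proof.
move=> hn t0 t1 ha hb.
have /andP[K0 K1] := @K_bound R n t a b hn t0 t1 ha hb.
have N0 : n%:R != 0 :> R by rewrite pnatr_eq0; apply/eqP => n0; rewrite n0 in hn.
move: ha hb => /andP[a0 a1] /andP[b0 b1].
have da : 1 - t * a != 0 by apply/lt0r_neq0; nra.
have db : 1 - t * b != 0.
  have h2 : 2%:R^-1 < 1 :> R by rewrite invf_lt1 ?ltr1n // ltr0n.
  by apply/lt0r_neq0; nra.
have -> : (1 - a) * t * (n%:R^-1 / (1 - t * a)) - (1 - b) * t * (n%:R^-1 / (1 - t * b))
   = (b - a) * (t * ((1 - t) / (n%:R * (1 - t * a) * (1 - t * b)))).
  move: N0 da db; set N := n%:R; move=> N0 da db. by field; rewrite N0 da db.
rewrite normrM distrC -[X in _ <= X]mulr1; apply: ler_wpM2l => //.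
rewrite ger0_norm; last exact: mulr_ge0 t0 K0.
have := ler_pM t0 K0 (ltW t1) K1; by rewrite mul1r.
Qed.

Section Main.
Variables (R : rcfType) (n : nat) (C : 'M[R]_n) (theta : 'cV[R]_n) (l : 'I_n).
Hypotheses (hn : (2 <= n)%N) (hC : row_stochastic_zero_diag C)
  (hth : forall i, 0 <= theta i 0 /\ theta i 0 < 1)
  (hstar : star_topology C l) (hl : theta l 0 = 0).

Lemma Nn0 : n%:R != 0 :> R.
Proof. by rewrite pnatr_eq0; apply/eqP => n0; move: hn; rewrite n0. Qed.

Lemma Ck k i : k != l -> C k i = (i == l)%:R.
Proof.
move=> kl; case: hC => C0 [Csum _].
have Coff j : j != l -> C k j = 0.
  move=> jl; apply/eqP; rewrite eq_le C0 andbT leNgt; apply/negP.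
  by case/hstar => h; [rewrite h eqxx in kl | rewrite h eqxx in jl].
case: (eqVneq i l) => [->|il]; last by rewrite Coff.
have := Csum k; rewrite (bigD1 l) //= big1 ?addr0 => [->//|j /Coff //].
Qed.

Lemma Cth k i : C k i * theta k 0 = (i == l)%:R * theta k 0.
Proof.
by case: (eqVneq k l) => [->|kl]; [rewrite hl !mulr0 | rewrite Ck].
Qed.

Lemma Wentry x k i : Wmat C x k i = x k 0 * (k == i)%:R + (1 - x k 0) * C k i.
Proof.
rewrite /Wmat /diagv mulmxBl mul1mx mul_diag_mx !mxE mulr_natr; ring.
Qed.

Definition Mx x := 1%:M - (Wmat C x)^T *m diagv theta.

Lemma WTsum x (v : 'I_n -> R) i :
  \sum_k Wmat C x k i * (theta k 0 * v k) =
  x i 0 * theta i 0 * v i + (i == l)%:R * \sum_k (1 - x k 0) * theta k 0 * v k.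
Proof.
under eq_bigr do rewrite Wentry mulrDl.
rewrite big_split /=; congr (_ + _).
  rewrite (bigD1 i) //= big1 ?addr0 => [|k /negbTE ->]; last by rewrite !mulr0 mul0r.
  by rewrite eqxx mulr1 mulrA.
rewrite mulr_sumr; apply: eq_bigr => k _.
transitivity ((1 - x k 0) * (C k i * theta k 0) * v k); first by ring.
by rewrite Cth; ring.
Qed.

Lemma Mmul x (v : 'cV_n) i :
  (Mx x *m v) i 0 = v i 0 - \sum_k Wmat C x k i * (theta k 0 * v k 0).
Proof.
rewrite /Mx mulmxBl mul1mx -mulmxA mul_diag_mx !mxE; congr (_ - _).
by apply: eq_bigr => k _; rewrite !mxE.
Qed.

Lemma vMmul x (v : 'rV_n) k :
  (v *m Mx x) 0 k = v 0 k - (\sum_i v 0 i * Wmat C x k i) * theta k 0.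
Proof.
rewrite /Mx mulmxBr mulmx1 mulmxA /diagv mul_mx_diag !mxE; congr (_ - _ * _).
by apply: eq_bigr => i _; rewrite !mxE.
Qed.


Definition good (x : 'cV[R]_n) := forall i, i != l -> 0 <= x i 0 <= 1.

Lemma dpos {x} : good x -> forall i, 0 < 1 - theta i 0 * x i 0.
Proof.
move=> gx i; case: (eqVneq i l) => [->|il]; first by rewrite hl mul0r subr0.
have /andP[x0 x1] := gx i il; have [t0 t1] := hth i; nra.
Qed.

Lemma unitM {x} : good x -> Mx x \in unitmx.
Proof.
move=> gx; rewrite unitmxE unitfE; apply/negP => /det0P [v nz vM].
move/negP: nz; apply; apply/eqP.
have vl : v 0 l = 0.
  by have := congr1 (fun A : 'M[R]_(1,n) => A 0 l) vM; rewrite vMmul hl mulr0 subr0 mxE.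
apply/rowP => k; rewrite mxE; case: (eqVneq k l) => [->//|kl].
have := congr1 (fun A : 'M[R]_(1,n) => A 0 k) vM; rewrite vMmul mxE.
have -> : \sum_i v 0 i * Wmat C x k i = v 0 k * x k 0.
  rewrite (bigD1 k) //= big1 => [|i ik].
    by rewrite Wentry Ck // eqxx (negbTE kl) mulr1 mulr0 addr0 addr0 mulrC.
  rewrite Wentry Ck // eq_sym (negbTE ik) mulr0 add0r.
  by case: (eqVneq i l) => [->|il]; rewrite ?vl ?mul0r // mulr0 mulr0.
move=> h.
have : v 0 k * (1 - theta k 0 * x k 0) = 0 by rewrite -h; ring.
move/eqP; rewrite mulf_eq0 => /orP [/eqP //|].
by rewrite gt_eqF // dpos.
Qed.

Definition u (x : 'cV[R]_n) k := n%:R^-1 / (1 - theta k 0 * x k 0).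
Definition S (x : 'cV[R]_n) := \sum_k (1 - x k 0) * theta k 0 * u x k.
Definition yv (x : 'cV[R]_n) : 'cV[R]_n := \col_i (u x i + (i == l)%:R * S x).
Definition Phi (x : 'cV[R]_n) : 'cV[R]_n := \col_i ((1 - theta i 0) * (u x i + (i == l)%:R * S x)).

Lemma My {x} : good x -> Mx x *m yv x = n%:R^-1 *: ones R n.
Proof.
move=> gx; apply/colP => i; rewrite Mmul (WTsum x (fun k => yv x k 0)).
have -> : \sum_k (1 - x k 0) * theta k 0 * yv x k 0 = S x.
  apply: eq_bigr => k _; rewrite mxE.
  case: (eqVneq k l) => [->|kl]; first by rewrite hl !mulr0 !mul0r.
  by rewrite mul0r addr0.
rewrite !mxE mulr1; case: (eqVneq i l) => [->|il].
  by rewrite /u hl !mulr0 !mul0r subr0 divr1 add0r addrK.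
rewrite /u !mul0r !addr0.
have := dpos gx i; set d := 1 - theta i 0 * x i 0 => d0.
have dn : d != 0 by rewrite gt_eqF.
by rewrite /d; field; rewrite Nn0 dn.
Qed.

Lemma F_Phi {x} : good x -> Fmap C theta x = Phi x.
Proof.
move=> gx; rewrite /Fmap -mulmxA -(My gx).
rewrite (mulKmx (unitM gx)).
apply/colP => i; rewrite mulmxBl mul1mx /diagv mul_diag_mx !mxE; ring.
Qed.

Lemma good_simplex {x} : in_simplex x -> good x.
Proof.
case=> x0 xs i _; rewrite x0 /=; rewrite -xs (bigD1 i) //= lerDl.
by apply: sumr_ge0.
Qed.

Lemma Phi_simplex {x} : good x -> in_simplex (Phi x).
Proof.
move=> gx.
have N0 : 0 < n%:R :> R by rewrite ltr0n; apply: ltn_trans hn.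
have u0 k : 0 <= u x k by rewrite /u divr_ge0 ?invr_ge0 ?ltW // dpos.
have S0 : 0 <= S x.
  apply: sumr_ge0 => k _; case: (eqVneq k l) => [->|kl]; first by rewrite hl mulr0 mul0r.
  have /andP[_ x1] := gx k kl; have [t0 _] := hth k.
  by rewrite mulr_ge0 // mulr_ge0 // subr_ge0.
split.
  move=> i; rewrite mxE; have [_ t1] := hth i.
  apply: mulr_ge0; first by rewrite subr_ge0 ltW.
  by apply: addr_ge0 => //; apply: mulr_ge0 => //; exact: ler0n.
under eq_bigr do rewrite mxE mulrDr.
rewrite big_split /=.
have -> : \sum_i (1 - theta i 0) * ((i == l)%:R * S x) = S x.
  rewrite (bigD1 l) //= big1 => [|i /negbTE ->]; last by rewrite mul0r mulr0.
  by rewrite eqxx hl subr0 !mul1r addr0.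
rewrite /S -big_split /=.
have -> : \sum_i ((1 - theta i 0) * u x i + (1 - x i 0) * theta i 0 * u x i)
   = \sum_(i < n) n%:R^-1.
  apply: eq_bigr => i _; rewrite /u.
  have := dpos gx i; set d := 1 - theta i 0 * x i 0 => d0.
  have dn : d != 0 by rewrite gt_eqF.
  by rewrite /d; field; rewrite Nn0 dn.
by rewrite sumr_const card_ord -(mulr_natl (n%:R^-1) n) mulfV // Nn0.
Qed.


Local Notation xs := (xstar theta l).

Lemma Ninv_le : n%:R^-1 <= 2%:R^-1 :> R.
Proof. by rewrite lef_pV2 ?posrE ?ltr0n ?ler_nat //; apply: ltn_trans hn. Qed.

Lemma Phi_off x i : i != l ->
  Phi x i 0 = (1 - theta i 0) * (n%:R^-1 / (1 - theta i 0 * x i 0)).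
Proof. by move=> il; rewrite mxE (negbTE il) mul0r addr0. Qed.

Lemma Phi_l x : Phi x l 0 = n%:R^-1 + S x.
Proof. by rewrite mxE eqxx hl subr0 !mul1r /u hl mul0r subr0 divr1. Qed.

Lemma xs_off i : i != l -> 0 <= xs i 0 <= 2%:R^-1 /\
  xs i 0 = (1 - theta i 0) * (n%:R^-1 / (1 - theta i 0 * xs i 0)).
Proof.
move=> il; rewrite mxE (negbTE il); have [t0 t1] := hth i.
case: ifP => tp.
  have [z0 [z1 zf]] := @xp_props R n (theta i 0) hn tp t1.
  split=> //; apply/andP; split=> //; exact: le_trans z1 Ninv_le.
have th0 : theta i 0 = 0 by apply/eqP; rewrite eq_le t0 andbT leNgt tp.
rewrite th0 subr0 mul0r subr0 divr1 mul1r; split=> //.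
by rewrite Ninv_le invr_ge0 ler0n.
Qed.

Lemma xs_good : good xs.
Proof.
move=> i il; have [/andP[h0 h1] _] := xs_off _ il; rewrite h0 /=.
apply: le_trans h1 _; rewrite invf_le1 ?ler1n ?ltr0n //.
Qed.

Lemma S_xs : S xs = n%:R^-1 * \sum_(j | 0 < theta j 0)
   (theta j 0 * (1 - xstar_p n (theta j 0)) / (1 - theta j 0 * xstar_p n (theta j 0))).
Proof.
rewrite big_mkcond mulr_sumr /S; apply: eq_bigr => k _; case: ifP => tp.
  have kl : k != l by apply: contraTneq tp => ->; rewrite hl ltxx.
  rewrite /u mxE (negbTE kl) tp; ring.
have [t0 _] := hth k.
have th0 : theta k 0 = 0 by apply/eqP; rewrite eq_le t0 andbT leNgt tp.
by rewrite th0 mulr0 mul0r mulr0.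
Qed.

Lemma Phi_xs : Phi xs = xs.
Proof.
apply/colP => i; case: (eqVneq i l) => [->|il].
  by rewrite Phi_l S_xs [RHS]mxE eqxx.
rewrite Phi_off //; have [_ e] := xs_off _ il; exact: esym e.
Qed.


Lemma simplex01 (x : 'cV[R]_n) i : in_simplex x -> 0 <= x i 0 <= 1.
Proof.
case=> x0 xs1; rewrite x0 /= -xs1 (bigD1 i) //= lerDl.
by apply: sumr_ge0.
Qed.

Lemma xs_simplex : in_simplex xs.
Proof. by rewrite -Phi_xs; apply: Phi_simplex xs_good. Qed.

Lemma off_contr {x : 'cV[R]_n} {i} : good x -> i != l ->
  `|Phi x i 0 - xs i 0| <= theta i 0 * `|x i 0 - xs i 0|.
Proof.
move=> gx il; have [hb e] := xs_off _ il; rewrite Phi_off // {1}e.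
have [t0 t1] := hth i.
exact: (@g_contr R n (theta i 0) (x i 0) (xs i 0) hn t0 t1 (gx i il) hb).
Qed.

Lemma S_contr (x : 'cV[R]_n) : good x -> forall b : R,
  (forall k, k != l -> `|x k 0 - xs k 0| <= b) -> 0 <= b ->
  `|S x - S xs| <= n%:R * b.
Proof.
move=> gx b hb b0; rewrite /S -sumrB.
apply: le_trans (ler_norm_sum _ _ _) _.
have -> : n%:R * b = \sum_(k < n) b by rewrite sumr_const card_ord mulr_natl.
apply: ler_sum => k _; case: (eqVneq k l) => [->|kl].
  by rewrite hl !mulr0 !mul0r subrr normr0.
have [t0 t1] := hth k; have [hxb _] := xs_off _ kl.
apply: le_trans (hb k kl).
exact: (@T_contr R n (theta k 0) (x k 0) (xs k 0) hn t0 t1 (gx k kl) hxb).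
Qed.

Lemma uniq_fix y : in_simplex y -> Fmap C theta y = y -> y = xs.
Proof.
move=> sy; have gy := good_simplex sy; rewrite F_Phi // => hy.
have off i : i != l -> y i 0 = xs i 0.
  move=> il; have := off_contr gy il; rewrite hy => h.
  have [t0 t1] := hth i.
  have n0 := normr_ge0 (y i 0 - xs i 0).
  have : `|y i 0 - xs i 0| <= 0 by nra.
  by rewrite normr_le0 subr_eq0 => /eqP.
apply/colP => i; case: (eqVneq i l) => [->|il]; last exact: off.
rewrite -hy Phi_l -[in RHS]Phi_xs Phi_l; congr (_ + _).
apply: eq_bigr => k _; case: (eqVneq k l) => [->|kl].
  by rewrite hl !mulr0 !mul0r.
by rewrite /u off.
Qed.

Lemma conv x0 : in_simplex x0 ->
  exists c r : R, 0 <= c /\ 0 <= r /\ r < 1 /\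
    forall (s : nat) (i : 'I_n),
      `|traj C theta x0 s i 0 - xs i 0| <= c * r ^+ s.
Proof.
move=> sx0.
set r := \big[Order.max/2%:R^-1]_i theta i 0.
have h2 : 0 < 2%:R^-1 :> R by rewrite invr_gt0 ltr0n.
have r2 : 2%:R^-1 <= r := bigmax_ge_id _ _ _ _.
have r0 : 0 < r by apply: lt_le_trans r2.
have thr i : theta i 0 <= r by apply: (le_bigmax (2%:R^-1) (fun i => theta i 0) i).
have r1 : r < 1.
  apply: bigmax_lt; first by rewrite invf_lt1 ?ltr1n ?ltr0n.
  by move=> i _; case: (hth i).
have N0 : 0 < n%:R :> R by rewrite ltr0n; apply: ltn_trans hn.
have ts s : in_simplex (traj C theta x0 s).
  elim: s => [//|s IH].
  have -> : traj C theta x0 s.+1 = Fmap C theta (traj C theta x0 s) by [].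
  have g := good_simplex IH; rewrite (F_Phi g); exact: Phi_simplex g.
have trS s : traj C theta x0 s.+1 = Phi (traj C theta x0 s).
  by rewrite -(F_Phi (good_simplex (ts s))).
have d01 x i : in_simplex x -> `|x i 0 - xs i 0| <= 1.
  move=> sx; have /andP[a0 a1] := simplex01 _ i sx.
  have /andP[b0 b1] := simplex01 _ i xs_simplex.
  by rewrite ler_norml; apply/andP; split; lra.
have offb s i : i != l -> `|traj C theta x0 s i 0 - xs i 0| <= r ^+ s.
  move=> il; elim: s => [|s IH]; first by rewrite expr0 d01.
  rewrite trS; apply: le_trans (off_contr (good_simplex (ts s)) il) _.
  by rewrite exprS; apply: ler_pM => //; case: (hth i).
have c1 : 1 <= n%:R / r.
  rewrite ler_pdivlMr // mul1r; apply: le_trans (ltW r1) _.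
  by rewrite ler1n; apply: ltnW.
exists (n%:R / r), r; split; first by rewrite divr_ge0 // ltW.
split; first exact: ltW.
split=> // s i.
have rs0 : 0 <= r ^+ s by rewrite exprn_ge0 // ltW.
case: (eqVneq i l) => [->|il]; last first.
  apply: le_trans (offb s i il) _; rewrite -[X in X <= _]mul1r.
  exact: ler_wpM2r.
case: s rs0 => [|s] rs0.
  by rewrite expr0 mulr1; apply: le_trans c1; apply: d01.
rewrite trS Phi_l -{1}Phi_xs Phi_l.
have e : forall a b c : R, a + b - (a + c) = b - c by move=> a b c; ring.
rewrite e.
have -> : n%:R / r * r ^+ s.+1 = n%:R * r ^+ s.
  by rewrite exprS mulrA mulfVK // gt_eqF.
apply: S_contr; first exact: good_simplex.
  by move=> k kl; apply: offb.
exact: exprn_ge0 (ltW r0).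
Qed.


Lemma main_sec : let xs := xstar theta l in
  [/\ (forall x : 'cV[R]_n, in_simplex x ->
         (1%:M - (Wmat C x)^T *m diagv theta) \in unitmx),
      in_simplex xs,
      Fmap C theta xs = xs,
      (forall y : 'cV[R]_n, in_simplex y -> Fmap C theta y = y -> y = xs) &
      (forall x0 : 'cV[R]_n, in_simplex x0 ->
         exists c r : R, 0 <= c /\ 0 <= r /\ r < 1 /\
           forall (s : nat) (i : 'I_n),
             `|traj C theta x0 s i 0 - xs i 0| <= c * r ^+ s)].
Proof.
split.
- by move=> x sx; exact: (unitM (good_simplex sx)).
- exact: xs_simplex.
- by rewrite (F_Phi xs_good) Phi_xs.
- exact: uniq_fix.
- exact: conv.
Qed.

End Main.

Theorem corollary4 (R : rcfType) (n : nat) (C : 'M[R]_n) (theta : 'cV[R]_n)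
  (l : 'I_n) :
  (2 <= n)%N ->
  row_stochastic_zero_diag C ->
  (forall i, 0 <= theta i 0 /\ theta i 0 < 1) ->
  (exists j, 0 < theta j 0) ->
  star_topology C l ->
  theta l 0 = 0 ->
  let xs := xstar theta l in
  [/\ (forall x : 'cV[R]_n, in_simplex x ->
         (1%:M - (Wmat C x)^T *m diagv theta) \in unitmx),
      in_simplex xs,
      Fmap C theta xs = xs,
      (forall y : 'cV[R]_n, in_simplex y -> Fmap C theta y = y -> y = xs) &
      (forall x0 : 'cV[R]_n, in_simplex x0 ->
         exists c r : R, 0 <= c /\ 0 <= r /\ r < 1 /\
           forall (s : nat) (i : 'I_n),
             `|traj C theta x0 s i 0 - xs i 0| <= c * r ^+ s)].
Proof.
move=> hn hC hth _ hstar hl; exact: main_sec.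
Qed.
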